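(* Let $\mathcal{SB}=\langle\mathcal{L},A,\to,\text{supp}\rangle$ be a saturated SBAF. Then every preferred extension $E\subseteq A$ of $\langle A,\to\rangle$ is a confident weakly coherent argument extension.
   Context: A language is a triple $\mathcal{L}=\langle L,\overline{\cdot},n\rangle$: $L$ is a nonempty set of sentences; $\overline{\cdot}$ assigns to each $s\in L$ a set $\overline{s}\subseteq L$ of sentences incompatible with $s$, and is symmetric; $n$ is a partial naming function assigning to an argument $a$ a sentence $n(a)\in L$ (if undefined, put $\overline{n(a)}:=\emptyset$), with $\overline{n(\langle\{t\},t\rangle)}=\emptyset$. An argument is a pair $a=\langle Prem(a),Conc(a)\rangle$ with $Prem(a)$ a nonempty finite subset of $L$ and $Conc(a)\in L$; $Sent(a):=Prem(a)\cup\{Conc(a)\}$, $Sent(E):=\bigcup_{a\in E}Sent(a)$. The minimal argument for $s$ is $\langle\{s\},s\rangle$. A set $E$ supports $a$ if $Prem(a)\subseteq Sent(E)$; $E$ contains undercutting information for $a$ if $\overline{n(a)}\cap Sent(E)\neq\emptyset$. Argument $a$ attacks $b$ ($a\to b$) if $Conc(a)\in\overline{s}$ for some $s\in Sent(b)$ or $Conc(a)\in\overline{n(b)}$. An SBAF is $\langle\mathcal{L},A,\to,\text{supp}\rangle$ with $A$ a finite set of arguments. For $E\subseteq A$: $E$ defends $a\in A$ if for every $b\in A$ with $b\to a$ some element of $E$ attacks $b$; $E$ is conflict-free if no $a,b\in E$ with $a\to b$; admissible if conflict-free and defends all its elements; preferred if $\subseteq$-maximal among admissible sets. $E$ is weakly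 coherent if it is admissible and every $a\in A$ supported by $E$, for which $E$ contains no undercutting information and which $E$ defends, belongs to $E$. $S$ is compatible if no $s,t\in S$ with $s\in\overline t$. $Arg_s(S):=\{a\in A\mid Prem(a)\subseteq S\text{ and }\overline{n(a)}\cap S=\emptyset\}$; $R^S(E):=\{a\in A\mid a\in Arg_s(S)\text{ and }E\text{ defends }a\}$. For compatible $S$, $Init(S)$ is the largest admissible subset of $\{a\in A\mid Sent(a)\subseteq S\text{ and }\overline{n(a)}\cap S=\emptyset\}$, and $Arg_w(S)$ is the $\subseteq$-least set $E$ with $Init(S)\subseteq E$ and $R^S(E)=E$. A weakly adequate language extension is a compatible $S\subseteq Sent(A)$ with $Sent(a)\subseteq S$ for all $a\in Arg_w(S)$; it is confident if it is $\subseteq$-maximal among weakly adequate language extensions. An argument extension $E$ is confident weakly coherent if it is weakly coherent and $E=Arg_w(S)$ for some confident weakly adequate language extension $S$. The SBAF is saturated if (i) for every $s\in Sent(A)$ for which some $t\in Sent(A)\cap\overline{s}$ exists, $A$ contains the minimal argument for $s$ or the minimal argument for $t$, and (ii) for every $u\in Sent(A)$ with $u\in\overline{n(a)}$ for some $a\in A$, $A$ contains the minimal argument for $u$. *)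

(* Defs.v *)
From HB Require Import structures.
From mathcomp Require Import all_boot finmap.
Set Implicit Arguments. Unset Strict Implicit. Unset Printing Implicit Defensive.
Local Open Scope fset_scope.

Section SBAF.
Variable S : choiceType.

Definition Arg : Type := ({fset S} * S)%type.
Definition Prem (a : Arg) : {fset S} := a.1.
Definition Conc (a : Arg) : S := a.2.
Definition minarg (s : S) : Arg := ([fset s], s).

Definition Sent (a : Arg) (s : S) : Prop := s \in Prem a \/ s = Conc a.

Variable inc : S -> S -> Prop.  (* inc s t  <->  t \in overline s *)
Variable n : Arg -> option S.
Variable A : {fset Arg}.

(* u \in overline (n a), empty when n a undefined *)
Definition und (a : Arg) (u : S) : Prop :=
  match n a with Some x => inc x u | None => False end.

Definition SentE (E : Arg -> Prop) (s : S) : Prop := exists a, E a /\ Sent a s.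
Definition SentA (s : S) : Prop := exists2 a, a \in A & Sent a s.

Definition attacks (a b : Arg) : Prop :=
  (exists s, Sent b s /\ inc s (Conc a)) \/ und b (Conc a).

Definition subA (E : Arg -> Prop) : Prop := forall a, E a -> a \in A.
Definition incl (E F : Arg -> Prop) : Prop := forall a, E a -> F a.

Definition defends (E : Arg -> Prop) (a : Arg) : Prop :=
  forall b, b \in A -> attacks b a -> exists c, E c /\ attacks c b.
Definition conflict_free (E : Arg -> Prop) : Prop :=
  forall a b, E a -> E b -> ~ attacks a b.
Definition admissible (E : Arg -> Prop) : Prop :=
  subA E /\ conflict_free E /\ (forall a, E a -> defends E a).
Definition preferred (E : Arg -> Prop) : Prop :=
  admissible E /\ (forall E', admissible E' -> incl E E' -> incl E' E).

Definition supports (E : Arg -> Prop) (a : Arg) : Prop :=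
  forall s, s \in Prem a -> SentE E s.
Definition undercut_info (E : Arg -> Prop) (a : Arg) : Prop :=
  exists u, und a u /\ SentE E u.

Definition weakly_coherent (E : Arg -> Prop) : Prop :=
  admissible E /\
  (forall a, a \in A -> supports E a -> ~ undercut_info E a -> defends E a -> E a).

Definition compatible (X : S -> Prop) : Prop :=
  forall s t, X s -> X t -> ~ inc t s.

Definition Arg_s (X : S -> Prop) (a : Arg) : Prop :=
  a \in A /\ (forall s, s \in Prem a -> X s) /\ (forall u, und a u -> ~ X u).
Definition R (X : S -> Prop) (E : Arg -> Prop) (a : Arg) : Prop :=
  Arg_s X a /\ defends E a.

Definition InitCand (X : S -> Prop) (a : Arg) : Prop :=
  a \in A /\ (forall s, Sent a s -> X s) /\ (forall u, und a u -> ~ X u).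
(* Init(X): largest admissible subset of InitCand X, i.e. the union of all of them *)
Definition Init (X : S -> Prop) (a : Arg) : Prop :=
  exists E, admissible E /\ incl E (InitCand X) /\ E a.
(* Arg_w(X): least E with Init X ⊆ E and R^X(E) = E, i.e. intersection of all such *)
Definition Arg_w (X : S -> Prop) (a : Arg) : Prop :=
  forall E, incl (Init X) E -> (forall b, R X E b <-> E b) -> E a.

Definition weakly_adequate (X : S -> Prop) : Prop :=
  compatible X /\ (forall s, X s -> SentA s) /\
  (forall a, Arg_w X a -> forall s, Sent a s -> X s).
Definition confident (X : S -> Prop) : Prop :=
  weakly_adequate X /\
  (forall Y, weakly_adequate Y -> (forall s, X s -> Y s) -> forall s, Y s -> X s).

Definition confident_weakly_coherent (E : Arg -> Prop) : Prop :=
  weakly_coherent E /\ exists X, confident X /\ forall a, E a <-> Arg_w X a.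

Definition saturated : Prop :=
  (forall s t, SentA s -> SentA t -> inc s t -> minarg s \in A \/ minarg t \in A) /\
  (forall u a, SentA u -> a \in A -> und a u -> minarg u \in A).

End SBAF.

(* Main.v *)
Require Import Defs.
From HB Require Import structures.
From mathcomp Require Import all_boot finmap.
From Stdlib Require Import Classical ClassicalEpsilon.
Local Open Scope fset_scope.

Definition pb (P : Prop) : bool :=
  if excluded_middle_informative P then true else false.

Lemma pbP (P : Prop) : pb P = true <-> P.
Proof. by rewrite /pb; case: excluded_middle_informative. Qed.

Lemma count_strict (T : eqType) (Y Y' : T -> Prop) (l : seq T) :
  (forall s, Y s -> Y' s) ->
  count (fun s => ~~ pb (Y' s)) l <= count (fun s => ~~ pb (Y s)) l /\
  (forall s, s \in l -> Y' s -> ~ Y s ->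
     count (fun s => ~~ pb (Y' s)) l < count (fun s => ~~ pb (Y s)) l).
Proof.
move=> sub; elim: l => [|x l [IH1 IH2]] /=; first by split=> // s.
have hx : ~~ pb (Y' x) <= ~~ pb (Y x).
  case E1: (pb (Y x)); case E2: (pb (Y' x)) => //=.
  by move: E1 E2 => /pbP /sub /pbP ->.
split; first by rewrite leq_add.
move=> s; rewrite inE => /orP [/eqP -> | sl] Ys nYs.
- have -> : pb (Y' x) = true by apply/pbP.
  have -> : pb (Y x) = false by apply/negbTE/negP => /pbP.
  by rewrite /= add0n add1n ltnS.
- by rewrite -addnS; apply: leq_add hx (IH2 s sl Ys nYs).
Qed.

Theorem mainTheorem17 (S : choiceType) (s0 : S)
  (inc : S -> S -> Prop) (n : Arg S -> option S) (A : {fset Arg S})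
  (inc_sym : forall s t, inc s t -> inc t s)
  (n_min : forall t u, ~ und inc n (minarg t) u)
  (prem_ne : forall a, a \in A -> Prem a != fset0)
  (sat : saturated inc n A) :
  forall E : Arg S -> Prop, preferred inc n A E -> confident_weakly_coherent inc n A E.
Proof.
move=> E [[EA [Ecf Edef]] Emax].
have Sent_min : forall u s : S, Sent (minarg u) s -> s = u.
  move=> u s; rewrite /Sent; case=> [|->//]; by rewrite inE => /eqP.
have ext : forall b, b \in A -> defends inc n A E b -> E b.
  move=> b bA db.
  have noatt : forall c, E c -> ~ attacks inc n c b.
    move=> c Ec ac; case: (db c (EA c Ec) ac) => d [Ed adc]; exact: (Ecf d c Ed Ec adc).
  have adm : admissible inc n A (fun x => E x \/ x = b).
    split; [|split].
    - by move=> x [/EA|->].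
    - move=> x y [Ex|->] [Ey|->].
      + exact: Ecf.
      + exact: noatt.
      + move=> a; case: (Edef y Ey b bA a) => d [Ed adb]; exact: noatt Ed adb.
      + move=> a; case: (db b bA a) => d [Ed adb]; exact: noatt Ed adb.
    - move=> x Hx c cA ac.
      have dx : defends inc n A E x by case: Hx => [/Edef|->].
      by case: (dx c cA ac) => d [Ed ?]; exists d; split; [left|].
  exact: (Emax _ adm (fun x Ex => or_introl Ex) b (or_intror erefl)).
have key : forall X, compatible inc X -> (forall s, X s -> SentA A s) ->
    (forall s, SentE E s -> X s) -> forall a, Arg_w inc n A X a <-> E a.
  move=> X cX XA EX.
  have Ecand : forall a, E a -> InitCand inc n A X a.
    move=> a Ea; split; [exact: EA| split].
    - by move=> s Ss; apply: EX; exists a.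
    - move=> u und_u Xu.
      have mA : minarg u \in A by exact: ((proj2 sat) u a (XA u Xu) (EA a Ea) und_u).
      have att : attacks inc n (minarg u) a by right.
      case: (Edef a Ea _ mA att) => c [Ec [[s [Ss ics]]|]].
      + rewrite (Sent_min _ _ Ss) in ics.
        apply: (cX u (Conc c) Xu); last exact: inc_sym _ _ ics.
        by apply: EX; exists c; split=> //; right.
      + exact: n_min.
  have cfcand : conflict_free inc n (InitCand inc n A X).
    move=> a b [_ [Sa _]] [_ [Sb Ub]] [[s [Ss ics]]| ua].
    - exact: (cX (Conc a) s (Sa _ (or_intror erefl)) (Sb _ Ss) ics).
    - exact: (Ub _ ua (Sa _ (or_intror erefl))).
  have initE : forall a, Init inc n A X a -> E a.
    move=> a [E' [[E'A [_ E'def]] [E'c E'a]]].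
    have adm : admissible inc n A (fun x => E x \/ E' x).
      split; [|split].
      - by move=> x [/EA|/E'A].
      - move=> x y Hx Hy; apply: cfcand.
        + by case: Hx => [/Ecand|/E'c].
        + by case: Hy => [/Ecand|/E'c].
      - move=> x Hx c cA ac; case: Hx => [/Edef|/E'def] dx;
          case: (dx c cA ac) => d [? ?]; exists d; split => //; by [left|right].
    exact: (Emax _ adm (fun x Ex => or_introl Ex) a (or_intror E'a)).
  have Einit : forall a, E a -> Init inc n A X a.
    move=> a Ea; exists E; split; last by split.
    by split=> //; split.
  move=> a; split.
  - move=> H; apply: H; first exact: initE.
    move=> b; split.
    + by move=> [[bA [Pb Ub]] db]; apply: ext.
    + move=> Eb; split; last exact: Edef.
      case: (Ecand b Eb) => bA [Sb Ub]; split; [exact: bA | split; [move=> s sP; apply: Sb; left; exact: sP | exact: Ub]].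
  - by move=> Ea E'' sub _; apply: sub; apply: Einit.
have cE : compatible inc (SentE E).
  move=> s t [a [Ea Sa]] [b [Eb Sb]] its.
  have SAs : SentA A s by exists a => //; apply: EA.
  have SAt : SentA A t by exists b => //; apply: EA.
  case: ((proj1 sat) s t SAs SAt (inc_sym _ _ its)) => mA.
  - have att : attacks inc n (minarg s) b by left; exists t.
    case: (Edef b Eb _ mA att) => c [Ec [[s' [Ss' ics]]|]].
    + rewrite (Sent_min _ _ Ss') in ics.
      by apply: (Ecf c a Ec Ea); left; exists s.
    + exact: n_min.
  - have att : attacks inc n (minarg t) a by left; exists s; split=> //; apply: inc_sym.
    case: (Edef a Ea _ mA att) => c [Ec [[s' [Ss' ics]]|]].
    + rewrite (Sent_min _ _ Ss') in ics.
      by apply: (Ecf c b Ec Eb); left; exists t.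
    + exact: n_min.
have EsA : forall s, SentE E s -> SentA A s.
  by move=> s [a [Ea Sa]]; exists a => //; apply: EA.
have waE : weakly_adequate inc n A (SentE E).
  split=> //; split=> // a /(key _ cE EsA (fun s h => h)) Ea s Sa.
  by exists a.
pose l : seq S := flatten [seq Conc a :: enum_fset (Prem a) | a <- enum_fset A].
have inl : forall s, SentA A s -> s \in l.
  move=> s [a aA Sa]; apply/flattenP.
  exists (Conc a :: enum_fset (Prem a)); first exact: (map_f _ aA).
  by rewrite inE; case: Sa => [->|->]; rewrite ?eqxx ?orbT.
pose m (Y : S -> Prop) := count (fun s => ~~ pb (Y s)) l.
have exZ : forall k Y, m Y < k -> weakly_adequate inc n A Y ->
    exists Z, confident inc n A Z /\ forall s, Y s -> Z s.
  elim=> [|k IH] Y // mY wY.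
  case: (classic (confident inc n A Y)) => [cY|ncY]; first by exists Y.
  have [Y' [wY' [sub [s [Y's nYs]]]]] : exists Y', weakly_adequate inc n A Y' /\
      (forall s, Y s -> Y' s) /\ exists s, Y' s /\ ~ Y s.
    apply: NNPP => H; apply: ncY; split=> // Y' wY' sub s Y's.
    apply: NNPP => nYs; apply: H; exists Y'; split=> //; split=> //; by exists s.
  have lt : m Y' < m Y.
    apply: ((proj2 (@count_strict S Y Y' l sub)) s _ Y's nYs).
    by apply: inl; case: wY' => _ [+ _]; apply.
  have [Z [cZ YZ]] : exists Z, confident inc n A Z /\ forall s, Y' s -> Z s.
    by apply: IH wY'; apply: leq_trans lt _.
  by exists Z; split=> // x /sub /YZ.
have [Z [cZ EZ]] := exZ (m (SentE E)).+1 (SentE E) (ltnSn _) waE.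
split.
- split; first by split=> //; split.
  by move=> a aA _ _ da; apply: ext.
- exists Z; split=> // a.
  case: cZ => [[cZc [ZA _]] _].
  by split=> H; apply/(key Z cZc ZA EZ).
Qed.
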